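(* Let $\mathcal H$ be a Hilbert space, let $J$ be a directed set, let $\{U_j\}_{j\in J}$ be a net of unitary operators on $\mathcal H$, and let $\{\ell_j\}_{j\in J}\subset[0,\infty)$ satisfy $\ell_j\to\infty$. Assume there exists a self-adjoint operator $A$ in $\mathcal H$ such that $U_j\in C^1(A)$ for each $j\in J$, and suppose that the strong limit $$D:=\operatorname{s-lim}_j\frac{1}{\ell_j}[A,U_j]U_j^{-1}$$ exists (the operators being defined for $j$ large enough that $\ell_j\neq0$). Then $\lim_j\langle\varphi,U_j\psi\rangle=0$ for all $\varphi\in\ker(D)^\perp$ and all $\psi\in\mathcal H$.
   Context: The scalar product $\langle\cdot,\cdot\rangle$ is antilinear in the first argument. For a self-adjoint operator $A$ with domain $\mathrm{dom}(A)$ and a bounded operator $S$ on $\mathcal H$, one writes $S\in C^1(A)$ if the map $\mathbb R\ni t\mapsto e^{-itA}Se^{itA}$ is strongly continuously differentiable; equivalently, the quadratic form $\mathrm{dom}(A)\ni\varphi\mapsto\langle A\varphi,S\varphi\rangle-\langle \varphi,SA\varphi\rangle$ is continuous for the topology of $\mathcal H$. In that case $[A,S]$ denotes the bounded operator associated with the continuous extension of this form (i.e. $[A,S]=AS-SA$ in the form sense on $\mathrm{dom}(A)$). *)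

(* Defs.v *)
From HB Require Import structures.
From mathcomp Require Import all_boot all_order all_algebra.
From mathcomp Require Import complex.
From mathcomp Require Import all_classical all_reals topology normedtype.
Set Implicit Arguments.
Unset Strict Implicit.
Unset Printing Implicit Defensive.
Import Order.TTheory GRing.Theory Num.Theory.
Import numFieldNormedType.Exports.
Local Open Scope classical_set_scope.
Local Open Scope ring_scope.

Definition is_hilbert (R : realType) (H : completeNormedModType R[i])
    (ip : H -> H -> R[i]) : Prop :=
  [/\ forall (a : R[i]) (x y z : H), ip x (a *: y + z) = a * ip x y + ip x z,
      forall x y : H, ip y x = (ip x y)^*
    & forall x : H, ip x x = `|x| ^+ 2].

Definition lin_op (R : realType) (H : completeNormedModType R[i]) (T : H -> H) :=
  forall (a : R[i]) (x y : H), T (a *: x + y) = a *: T x + T y.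

Definition bounded_op (R : realType) (H : completeNormedModType R[i]) (T : H -> H) :=
  lin_op T /\ continuous T.

Definition unitary_op (R : realType) (H : completeNormedModType R[i])
    (ip : H -> H -> R[i]) (U Uinv : H -> H) : Prop :=
  [/\ lin_op U,
      forall x y, ip (U x) (U y) = ip x y,
      forall x, U (Uinv x) = x
    & forall x, Uinv (U x) = x].

(** Self-adjoint (possibly unbounded) operator A with domain domA:
    domA is a dense linear subspace, A is linear on domA, and A* = A
    (including equality of domains): psi ∈ dom(A* ) with A* psi = eta iff
    <A phi, psi> = <phi, eta> for all phi ∈ domA. *)
Definition self_adjoint (R : realType) (H : completeNormedModType R[i])
    (ip : H -> H -> R[i]) (domA : set H) (A : H -> H) : Prop :=
  [/\ domA 0,
      forall (a : R[i]) x y, domA x -> domA y -> domA (a *: x + y),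
      forall (a : R[i]) x y, domA x -> domA y -> A (a *: x + y) = a *: A x + A y,
      closure domA = setT
    & forall psi eta : H,
        (forall phi, domA phi -> ip (A phi) psi = ip phi eta) <->
        (domA psi /\ eta = A psi)].

(** [is_commutator ip domA A S B]: B is the bounded operator associated with the
    continuous extension of the form <A phi, S psi> - <phi, S A psi> on dom(A).
    Existence of such B is exactly S ∈ C^1(A), and then B = [A,S]
    (B is unique since dom(A) is dense). *)
Definition is_commutator (R : realType) (H : completeNormedModType R[i])
    (ip : H -> H -> R[i]) (domA : set H) (A S B : H -> H) : Prop :=
  bounded_op B /\
  forall phi psi, domA phi -> domA psi ->
    ip phi (B psi) = ip (A phi) (S psi) - ip phi (S (A psi)).

Definition directed (J : Type) (le : J -> J -> Prop) : Prop :=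
  [/\ inhabited J,
      forall i, le i i,
      forall i j k, le i j -> le j k -> le i k
    & forall i j, exists k, le i k /\ le j k].

Definition net_cvg (J : Type) (le : J -> J -> Prop) (K : numDomainType)
    (V : normedZmodType K) (f : J -> V) (l : V) : Prop :=
  forall eps : K, 0 < eps -> exists j0, forall j, le j0 j -> `|f j - l| < eps.

Definition net_to_infty (J : Type) (le : J -> J -> Prop) (R : realType)
    (f : J -> R) : Prop :=
  forall M : R, exists j0, forall j, le j0 j -> M < f j.

(* Main.v *)
Require Import Defs.
From HB Require Import structures.
From mathcomp Require Import all_boot all_order all_algebra.
From mathcomp Require Import complex.
From mathcomp Require Import all_classical all_reals topology normedtype.
From mathcomp Require Import ring lra.
Import Order.TTheory GRing.Theory Num.Theory.
Import numFieldNormedType.Exports.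
Local Open Scope classical_set_scope.
Local Open Scope ring_scope.
Set Implicit Arguments.
Unset Strict Implicit.
Section Hil.
Variables (R : realType) (H : completeNormedModType R[i]) (ip : H -> H -> R[i]).
Hypothesis hH : is_hilbert ip.

Lemma ipDZr a x y z : ip x (a *: y + z) = a * ip x y + ip x z.
Proof. by case: hH. Qed.
Lemma ipC x y : ip y x = (ip x y)^*.
Proof. by case: hH. Qed.
Lemma ipxx x : ip x x = `|x| ^+ 2.
Proof. by case: hH. Qed.
Lemma ip0r x : ip x 0 = 0.
Proof.
have := ipDZr 1 x 0 0; rewrite scaler0 addr0 mul1r => /eqP.
by rewrite -subr_eq0 opprD addrA subrr sub0r oppr_eq0 => /eqP.
Qed.
Lemma ipDr x y z : ip x (y + z) = ip x y + ip x z.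
Proof. by have := ipDZr 1 x y z; rewrite scale1r mul1r. Qed.
Lemma ipZr a x y : ip x (a *: y) = a * ip x y.
Proof. by have := ipDZr a x y 0; rewrite addr0 ip0r addr0. Qed.
Lemma ipNr x y : ip x (- y) = - ip x y.
Proof. by rewrite -scaleN1r ipZr mulN1r. Qed.
Lemma ipBr x y z : ip x (y - z) = ip x y - ip x z.
Proof. by rewrite ipDr ipNr. Qed.
Lemma ipDl x y z : ip (y + z) x = ip y x + ip z x.
Proof. by rewrite [ip (y+z) x]ipC [ip y x]ipC [ip z x]ipC ipDr rmorphD. Qed.
Lemma ipZl a x y : ip (a *: y) x = a^* * ip y x.
Proof. by rewrite [ip (a *: y) x]ipC [ip y x]ipC ipZr rmorphM. Qed.
Lemma ip0l x : ip 0 x = 0.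
Proof. by rewrite ipC ip0r rmorph0. Qed.
Lemma ipNl x y : ip (- y) x = - ip y x.
Proof. by rewrite [ip (- y) x]ipC [ip y x]ipC ipNr rmorphN. Qed.
Lemma ipBl x y z : ip (y - z) x = ip y x - ip z x.
Proof. by rewrite ipDl ipNl. Qed.

Lemma conj_norm (x : H) : (`|x| ^+ 2 : R[i])^* = `|x| ^+ 2.
Proof. by apply/CrealP; rewrite realX // normr_real. Qed.

Lemma CS x y : `|ip x y| <= `|x| * `|y|.
Proof.
have [->|y0] := eqVneq y 0.
  by rewrite ip0r normr0 normr0 mulr0.
set n := `|y| ^+ 2.
have n0 : n != 0 by rewrite expf_eq0 /= normr_eq0.
have n0' : 0 < n by rewrite exprn_gt0 // normr_gt0.
set c := ip y x.
set t := c / n.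
have h0 : 0 <= ip (x - t *: y) (x - t *: y) by rewrite ipxx exprn_ge0.
have hc : ip x y = c^* by rewrite /c -ipC.
have e : ip (x - t *: y) (x - t *: y) = `|x| ^+ 2 - c * c^* / n.
  rewrite ipBl !ipBr !ipZl !ipZr hc -/c ipxx -/n.
  have tc : t^* = c^* / n.
    rewrite /t rmorphM rmorphV ?unitfE //; congr (_ * _^-1); exact: conj_norm.
  rewrite (ipxx y) -/n tc /t.
  by field.
rewrite e subr_ge0 -normCK in h0.
have h1 : `|c| ^+ 2 <= (`|x| * `|y|) ^+ 2.
  by rewrite exprMn -/n -ler_pdivrMr.
rewrite hc norm_conjC.
by rewrite -(ler_pXn2r (n:=2)) // nnegrE ?mulr_ge0.
Qed.
End Hil.
Section Gen.
Variables (R : realType) (H : completeNormedModType R[i]).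

Lemma dense_approx (P : set H) : closure P = setT ->
  forall x (e : R[i]), 0 < e -> exists a, P a /\ `|x - a| < e.
Proof.
move=> hP x e e0.
have : closure P x by rewrite hP.
move=> /(_ (ball x e) (nbhsx_ballx _ _ e0)) [a [Pa Ba]].
by exists a; split => //; rewrite -ball_normE in Ba.
Qed.

Definition ctsed (g : H -> H) := forall u (e : R[i]), 0 < e ->
  exists2 d, 0 < d & forall a, `|u - a| < d -> `|g u - g a| < e.

Lemma cont_ed (f : H -> H) : continuous f -> ctsed f.
Proof.
move=> fc x e e0.
have := fc x; move/cvgrPdist_lt/(_ e e0) => /nbhs_normP [d d0 hd].
by exists d => // y xy; apply: hd.
Qed.

Lemma zero_lt (z : R[i]) : (forall e, 0 < e -> `|z| < e) -> z = 0.
Proof.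
move=> hz; have [//|z0] := eqVneq z 0.
have gz : 0 < `|z| by rewrite normr_gt0.
by have := hz _ gz; rewrite ltxx.
Qed.

Lemma small_prod (a b e : R[i]) : 0 <= a -> 0 <= b -> 0 < e ->
  a < e / (b + 1) -> a * b < e.
Proof.
move=> a0 b0 e0 h.
have b1 : 0 < b + 1 by rewrite ltr_wpDl.
apply: (le_lt_trans (y := a * (b + 1))).
  by rewrite ler_wpM2l // lerDl.
by rewrite -ltr_pdivlMr.
Qed.

Lemma pos_eps (e b : R[i]) : 0 < e -> 0 <= b -> 0 < e / (b + 1).
Proof. by move=> e0 b0; rewrite divr_gt0 // ltr_wpDl. Qed.

Lemma min_pos (d1 d2 : R[i]) : 0 < d1 -> 0 < d2 ->
  exists d, [/\ 0 < d, d <= d1 & d <= d2].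
Proof.
move=> h1 h2; exists (d1 * d2 / (d1 + d2)).
have s0 : 0 < d1 + d2 by rewrite addr_gt0.
split; first by rewrite !divr_gt0 ?mulr_gt0.
  by rewrite ler_pdivrMr // mulrDr -subr_ge0 addrK mulr_ge0 // ltW.
by rewrite ler_pdivrMr // mulrDr -subr_ge0 [d2 * d1]mulrC addrAC subrr add0r mulr_ge0 // ltW.
Qed.

Lemma ext_dense (P : set H) (f : H -> R[i]) : closure P = setT ->
  (forall a, P a -> f a = 0) ->
  (forall u e, 0 < e -> exists2 d, 0 < d &
      forall a, `|u - a| < d -> `|f u - f a| < e) ->
  forall u, f u = 0.
Proof.
move=> hP h0 hc u; apply: zero_lt => e e0.
have [d d0 hd] := hc u e e0.
have [a [Pa ua]] := dense_approx hP u d0.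
by have := hd a ua; rewrite (h0 a Pa) subr0.
Qed.

Lemma cont2 (f : H -> R[i]) (g1 g2 : H -> H) (k1 k2 : R[i]) :
  0 <= k1 -> 0 <= k2 -> ctsed g1 -> ctsed g2 ->
  (forall u a, `|f u - f a| <= `|g1 u - g1 a| * k1 + `|g2 u - g2 a| * k2) ->
  forall u e, 0 < e -> exists2 d, 0 < d &
      forall a, `|u - a| < d -> `|f u - f a| < e.
Proof.
move=> k10 k20 c1 c2 hb u e e0.
have e20 : 0 < e / 2 by rewrite divr_gt0.
have [d1 d10 hd1] := c1 u _ (pos_eps e20 k10).
have [d2 d20 hd2] := c2 u _ (pos_eps e20 k20).
have [d [d0 dd1 dd2]] := min_pos d10 d20.
exists d => // a ua.
apply: (le_lt_trans (hb u a)); rewrite [e]splitr.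
apply: ltrD; apply: small_prod => //.
  by apply: hd1; apply: (lt_le_trans ua).
by apply: hd2; apply: (lt_le_trans ua).
Qed.

Lemma net_and (J : Type) (le : J -> J -> Prop) (P Q : J -> Prop) :
  directed le -> (exists j0, forall j, le j0 j -> P j) ->
  (exists j1, forall j, le j1 j -> Q j) ->
  exists k, forall j, le k j -> P j /\ Q j.
Proof.
move=> [_ _ tr up] [j0 h0] [j1 h1].
have [k [k0 k1]] := up j0 j1.
by exists k => j kj; split; [apply: h0; apply: tr kj|apply: h1; apply: tr kj].
Qed.

End Gen.
Section Lin.
Variables (R : realType) (H : completeNormedModType R[i]).
Variable T : H -> H.
Hypothesis hT : lin_op T.
Lemma lin0 : T 0 = 0.
Proof.
have := hT 1 0 0; rewrite scaler0 addr0 scale1r => /eqP.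
by rewrite -subr_eq0 opprD addrA subrr sub0r oppr_eq0 => /eqP.
Qed.
Lemma linD x y : T (x + y) = T x + T y.
Proof. by have := hT 1 x y; rewrite !scale1r. Qed.
Lemma linZ a x : T (a *: x) = a *: T x.
Proof. by have := hT a x 0; rewrite !addr0 lin0 addr0. Qed.
Lemma linN x : T (- x) = - T x.
Proof. by rewrite -scaleN1r linZ scaleN1r. Qed.
Lemma linB x y : T (x - y) = T x - T y.
Proof. by rewrite linD linN. Qed.
End Lin.

Section Op.
Variables (R : realType) (H : completeNormedModType R[i]) (ip : H -> H -> R[i]).
Hypothesis hH : is_hilbert ip.
Variables (S Si C A : H -> H) (domA : set H).
Hypothesis hS : unitary_op ip S Si.
Hypothesis hA : self_adjoint ip domA A.
Hypothesis hC : is_commutator ip domA A S C.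

Lemma S_lin : lin_op S. Proof. by case: hS. Qed.
Lemma S_ip x y : ip (S x) (S y) = ip x y. Proof. by case: hS. Qed.
Lemma SSi x : S (Si x) = x. Proof. by case: hS. Qed.
Lemma SiS x : Si (S x) = x. Proof. by case: hS. Qed.

Lemma Si_lin : lin_op Si.
Proof.
move=> a x y; rewrite -{1}(SSi x) -{1}(SSi y).
by rewrite -(linZ S_lin) -(linD S_lin) SiS.
Qed.

Lemma S_iso x : `|S x| = `|x|.
Proof.
apply/eqP; rewrite -(eqrXn2 (n:=2)) //.
by rewrite -!(ipxx hH) S_ip.
Qed.

Lemma Si_iso x : `|Si x| = `|x|.
Proof. by rewrite -{2}(SSi x) S_iso. Qed.

Lemma S_cts : ctsed S.
Proof.
move=> u e e0; exists e => // a ua.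
by rewrite -(linB S_lin) S_iso.
Qed.

Lemma C_lin : lin_op C. Proof. by case: hC => -[]. Qed.
Lemma C_cts : ctsed C. Proof. by case: hC => -[_ c] _; apply: cont_ed. Qed.
Lemma C_form phi psi : domA phi -> domA psi ->
    ip phi (C psi) = ip (A phi) (S psi) - ip phi (S (A psi)).
Proof. by case: hC => _; apply. Qed.

Lemma A_adj psi eta :
  (forall phi, domA phi -> ip (A phi) psi = ip phi eta) <-> (domA psi /\ eta = A psi).
Proof. by case: hA. Qed.

Lemma A_sym a b : domA a -> domA b -> ip (A a) b = ip a (A b).
Proof. by move=> da db; exact: (proj2 (A_adj b (A b)) (conj db erefl) a da). Qed.

Lemma F1 x : domA x -> domA (S x) /\ A (S x) = C x + S (A x).
Proof.
move=> dx; have [] := proj1 (A_adj (S x) (C x + S (A x))).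
  by move=> phi dphi; rewrite (ipDr hH) C_form // subrK.
by move=> h1 h2; split.
Qed.

Lemma sym1 a b : domA a -> domA b -> ip (C a) (S b) = ip (S a) (C b).
Proof.
move=> da db.
have [da' ea] := F1 da; have [db' eb] := F1 db.
have -> : C a = A (S a) - S (A a) by rewrite ea addrK.
have -> : C b = A (S b) - S (A b) by rewrite eb addrK.
rewrite (ipBl hH) (ipBr hH) !S_ip A_sym // A_sym //.
Qed.
End Op.
Section Op2.
Variables (R : realType) (H : completeNormedModType R[i]) (ip : H -> H -> R[i]).
Hypothesis hH : is_hilbert ip.
Variables (S Si C A : H -> H) (domA : set H).
Hypothesis hS : unitary_op ip S Si.
Hypothesis hA : self_adjoint ip domA A.
Hypothesis hC : is_commutator ip domA A S C.

Lemma domA_dense : closure domA = setT. Proof. by case: hA. Qed.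

Lemma sym_step1 b : domA b -> forall u, ip (C u) (S b) - ip (S u) (C b) = 0.
Proof.
move=> db.
apply: (ext_dense domA_dense).
  by move=> a da; rewrite (sym1 hH hS hA hC) // subrr.
apply: (cont2 (k1 := `|S b|) (k2 := `|C b|)) => //.
- exact: (C_cts hC).
- exact: (S_cts hH hS).
move=> u a.
have -> : ip (C u) (S b) - ip (S u) (C b) - (ip (C a) (S b) - ip (S a) (C b))
   = ip (C u - C a) (S b) - ip (S u - S a) (C b).
  by rewrite !(ipBl hH); ring.
apply: (le_trans (ler_normB _ _)).
by apply: lerD; apply: CS.
Qed.

Lemma sym2 u v : ip (C u) (S v) = ip (S u) (C v).
Proof.
apply/eqP; rewrite -subr_eq0; apply/eqP; move: v.
apply: (ext_dense domA_dense).
  by move=> a da; apply: sym_step1.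
apply: (cont2 (k1 := `|C u|) (k2 := `|S u|)) => //.
- exact: (S_cts hH hS).
- exact: (C_cts hC).
move=> v a.
have -> : ip (C u) (S v) - ip (S u) (C v) - (ip (C u) (S a) - ip (S u) (C a))
   = ip (C u) (S v - S a) - ip (S u) (C v - C a).
  by rewrite !(ipBr hH); ring.
apply: (le_trans (ler_normB _ _)).
by apply: lerD; rewrite mulrC; apply: CS.
Qed.

Lemma symT x y : ip (C (Si x)) y = ip x (C (Si y)).
Proof. by rewrite -{1}(SSi hS y) sym2 (SSi hS). Qed.
End Op2.
Lemma conj_realC (R : realType) (r : R) : ((r%:C)%C)^* = (r%:C)%C.
Proof. by apply/CrealP; rewrite complex_real. Qed.

Section Nets.
Variables (R : realType) (J : Type) (le : J -> J -> Prop).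
Hypothesis hJ : directed le.

Lemma zero_ltV (V : normedZmodType R[i]) (z : V) :
  (forall e, 0 < e -> `|z| < e) -> z = 0.
Proof.
move=> hz; have [//|z0] := eqVneq z 0.
have gz : 0 < `|z| by rewrite normr_gt0.
by have := hz _ gz; rewrite ltxx.
Qed.

Lemma net_unique (V : normedZmodType R[i]) (f : J -> V) l l' :
  net_cvg le f l -> net_cvg le f l' -> l = l'.
Proof.
move=> h h'; apply/eqP; rewrite -subr_eq0; apply/eqP; apply: zero_ltV => e e0.
have e20 : 0 < e / 2 by rewrite divr_gt0.
have [k hk] := net_and hJ (h _ e20) (h' _ e20).
have [_ refl _ _] := hJ.
have [h1 h2] := hk k (refl k).
apply: (le_lt_trans (ler_distD (f k) _ _)); rewrite [e]splitr.
by apply: ltrD => //; rewrite distrC.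
Qed.

Variables (H : completeNormedModType R[i]).

Lemma net_lin (f g : J -> H) l l' (a : R[i]) :
  net_cvg le f l -> net_cvg le g l' ->
  net_cvg le (fun j => a *: f j + g j) (a *: l + l').
Proof.
move=> hf hg e e0.
have e20 : 0 < e / 2 by rewrite divr_gt0.
have [k hk] := net_and hJ (hf _ (pos_eps e20 (normr_ge0 a))) (hg _ e20).
exists k => j kj; have [h1 h2] := hk j kj.
have -> : a *: f j + g j - (a *: l + l') = a *: (f j - l) + (g j - l').
  by rewrite scalerBr opprD addrACA.
apply: (le_lt_trans (ler_normD _ _)); rewrite [e]splitr normrZ.
apply: ltrD => //; rewrite mulrC; apply: small_prod => //.
Qed.

Variable ip : H -> H -> R[i].
Hypothesis hH : is_hilbert ip.

Lemma net_ipl (f : J -> H) l y :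
  net_cvg le f l -> net_cvg le (fun j => ip (f j) y) (ip l y).
Proof.
move=> hf e e0.
have [k hk] := hf _ (pos_eps e0 (normr_ge0 y)).
exists k => j kj; rewrite -(ipBl hH).
apply: (le_lt_trans (CS hH _ _)); apply: small_prod => //.
exact: hk.
Qed.

Lemma net_ipr (f : J -> H) l y :
  net_cvg le f l -> net_cvg le (fun j => ip y (f j)) (ip y l).
Proof.
move=> hf e e0.
have [k hk] := hf _ (pos_eps e0 (normr_ge0 y)).
exists k => j kj; rewrite -(ipBr hH).
apply: (le_lt_trans (CS hH _ _)); rewrite mulrC; apply: small_prod => //.
exact: hk.
Qed.
End Nets.
Lemma archi_inv (R : realType) (t : R) : 0 < t ->
  exists N, forall n, (N <= n)%N -> (n.+1%:R)^-1 < t.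
Proof.
move=> t0; exists (Num.truncn t^-1) => n hn.
have ti0 : 0 <= t^-1 by rewrite invr_ge0 ltW.
have /andP[_ h] := truncn_itv ti0.
have h2 : ((Num.truncn t^-1).+1%:R : R) <= n.+1%:R by rewrite ler_nat ltnS.
have h3 : t^-1 < n.+1%:R := lt_le_trans h h2.
have tt : t * t^-1 = 1 by rewrite mulfV // gt_eqF.
have n0 : (0 : R) < n.+1%:R by rewrite ltr0n.
rewrite -[_^-1]div1r ltr_pdivrMr //.
nra.
Qed.

Lemma le_of_eps (R : realType) (a b : R) : (forall t, 0 < t -> a <= b + t) -> a <= b.
Proof.
move=> h; rewrite leNgt; apply/negP => ba.
have := h ((a - b) / 2) (ltac:(by rewrite divr_gt0 // subr_gt0)).
lra.
Qed.

Section Main.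
Variables (R : realType) (H : completeNormedModType R[i])
    (ip : H -> H -> R[i]) (J : Type) (le : J -> J -> Prop)
    (U Uinv : J -> H -> H) (ell : J -> R)
    (domA : set H) (A : H -> H) (Comm : J -> H -> H) (D : H -> H).
Hypothesis hH : is_hilbert ip.
Hypothesis hJ : directed le.
Hypothesis hU : forall j, unitary_op ip (U j) (Uinv j).
Hypothesis hell : forall j, 0 <= ell j.
Hypothesis hinf : net_to_infty le ell.
Hypothesis hA : self_adjoint ip domA A.
Hypothesis hC : forall j, is_commutator ip domA A (U j) (Comm j).

Definition T j x := ((((ell j)^-1)%:C)%C *: Comm j (Uinv j x)).
Hypothesis hD : forall psi, net_cvg le (fun j => T j psi) (D psi).

Lemma T_lin j : lin_op (T j).
Proof.
move=> a x y; rewrite /T (Si_lin (hU j)) (C_lin (hC j)).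
by rewrite scalerDr !scalerA mulrC.
Qed.

Lemma T_sym j x y : ip (T j x) y = ip x (T j y).
Proof.
by rewrite /T (ipZl hH) (ipZr hH) conj_realC (symT hH (hU j) hA (hC j)).
Qed.

Lemma D_lin : lin_op D.
Proof.
move=> a x y; apply: (net_unique hJ (hD (a *: x + y))).
have -> : (fun j => T j (a *: x + y)) = (fun j => a *: T j x + T j y).
  by apply: funext => j; rewrite T_lin.
exact: net_lin.
Qed.

Lemma D_sym x y : ip (D x) y = ip x (D y).
Proof.
apply: (net_unique hJ (net_ipl hH y (hD x))).
have -> : (fun j => ip (T j x) y) = (fun j => ip x (T j y)).
  by apply: funext => j; rewrite T_sym.
exact: net_ipr.
Qed.

Definition nr (x : H) : R := complex.Re `|x|.

Lemma reE (z : R[i]) : 0 <= z -> z = ((complex.Re z)%:C)%C.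
Proof. by move=> h; rewrite RRe_real // ger0_real. Qed.

Lemma nrE x : `|x| = ((nr x)%:C)%C.
Proof. exact: reE. Qed.

Lemma nr_ge0 x : 0 <= nr x.
Proof. by have := normr_ge0 x; rewrite nrE (_ : 0 = (0 : R)%:C%C) // lecR. Qed.

Lemma nr_triangle x y : nr (x + y) <= nr x + nr y.
Proof. by have := ler_normD x y; rewrite !nrE -rmorphD lecR. Qed.

Lemma sqE x : (((nr x)^+2)%:C)%C = `|x|^+2.
Proof. by rewrite nrE rmorphXn. Qed.

Lemma c2 (a : R) : (((2 * a)%:C)%C) = 2 * (a%:C)%C.
Proof. by rewrite rmorphM rmorph_nat. Qed.

Lemma para u v : nr (u + v) ^+ 2 + nr (u - v) ^+ 2 = 2 * nr u ^+ 2 + 2 * nr v ^+ 2.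
Proof.
apply: complexI; rewrite !raddfD /= !c2 !sqE -!(ipxx hH).
rewrite !(ipDl hH) !(ipDr hH) ?(ipNl hH) ?(ipNr hH); ring.
Qed.

Lemma ctsed_id : ctsed (fun x : H => x).
Proof. by move=> u e e0; exists e. Qed.

Lemma CM (a b : R) : (a%:C)%C * (b%:C)%C = ((a * b)%:C)%C. Proof. by rewrite rmorphM. Qed.
Lemma CX (a : R) : (a%:C)%C ^+ 2 = ((a ^+ 2)%:C)%C. Proof. by rewrite rmorphXn. Qed.
Lemma CB (a b : R) : (a%:C)%C - (b%:C)%C = ((a - b)%:C)%C. Proof. by rewrite rmorphB. Qed.
Lemma CD (a b : R) : (a%:C)%C + (b%:C)%C = ((a + b)%:C)%C. Proof. by rewrite rmorphD. Qed.
Lemma C2 : 2 = ((2 : R)%:C)%C :> R[i]. Proof. by rewrite rmorph_nat. Qed.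
Lemma ltC (a b : R) : (a < b) = ((a%:C)%C < (b%:C)%C). Proof. by rewrite ltcR. Qed.

Lemma approx phi : (forall x, D x = 0 -> ip x phi = 0) ->
  forall e : R[i], 0 < e -> exists chi, domA chi /\ `|phi - D chi| < e.
Proof.
move=> hphi.
have dom0 : domA 0 by case: hA.
have domL : forall a x y, domA x -> domA y -> domA (a *: x + y) by case: hA.
pose E := [set r : R | exists chi, domA chi /\ r = nr (phi - D chi)].
have hE : has_inf E.
  split; first by exists (nr (phi - D 0)); exists 0.
  by exists 0 => r [chi [_ ->]]; exact: nr_ge0.
pose d := inf E.
have dle : forall chi, domA chi -> d <= nr (phi - D chi).
  by move=> chi dc; apply: (ge_inf hE.2); exists chi.
have d0 : 0 <= d.
  apply: lb_le_inf; first exact: hE.1.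
  by move=> r [chi [_ ->]]; exact: nr_ge0.
have hmin : forall n : nat, exists chi, domA chi /\ nr (phi - D chi) < d + (n.+1%:R)^-1.
  move=> n; have pn : (0 : R) < (n.+1%:R)^-1 by rewrite invr_gt0 ltr0n.
  have [r [chi [dc ->]] hr] := inf_adherent pn hE.
  by exists chi.
have [g hg] := choice hmin.
pose m n := D (g n).
have cauchy : forall t : R, 0 < t -> exists N, forall n k, (N <= n)%N -> (N <= k)%N ->
    nr (m n - m k) < t.
  move=> t t0.
  pose w2 := t ^+ 2 / (8 * d + 4).
  have w2e : w2 * (8 * d + 4) = t ^+ 2 by rewrite /w2 divfK // gt_eqF //; lra.
  have w20 : 0 < w2 by rewrite /w2 divr_gt0 ?exprn_gt0 //; lra.
  have [N1 hN1] := archi_inv (ltr01 : (0 : R) < 1).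
  have [N2 hN2] := archi_inv w20.
  exists (maxn N1 N2) => n k hn hk.
  have hn1 := hN1 n (leq_trans (leq_maxl _ _) hn).
  have hn2 := hN2 n (leq_trans (leq_maxr _ _) hn).
  have hk1 := hN1 k (leq_trans (leq_maxl _ _) hk).
  have hk2 := hN2 k (leq_trans (leq_maxr _ _) hk).
  have [_ ha] := hg n; have [_ hb] := hg k.
  have pos_n : (0 : R) < (n.+1%:R)^-1 by rewrite invr_gt0 ltr0n.
  have pos_k : (0 : R) < (k.+1%:R)^-1 by rewrite invr_gt0 ltr0n.
  have hpar := para (phi - m n) (phi - m k).
  have e1 : phi - m n - (phi - m k) = - (m n - m k).
    by rewrite !opprB addrC addrA subrK.
  have e2 : nr (phi - m n + (phi - m k)) = 2 * nr (phi - D (2^-1 *: (g n + g k))).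
    apply: complexI; rewrite c2 -!nrE.
    rewrite (linZ D_lin) (linD D_lin) -/(m n) -/(m k).
    have -> : phi - m n + (phi - m k) = 2 *: (phi - 2^-1 *: (m n + m k)).
      rewrite scalerBr scalerA mulfV ?pnatr_eq0 // scale1r scaler_nat mulr2n.
      by rewrite opprD addrACA.
    by rewrite normrZ normr_nat.
  have dw : domA (2^-1 *: (g n + g k)).
    have := domL 2^-1 _ _ (domL 1 _ _ (hg n).1 (hg k).1) dom0.
    by rewrite scale1r addr0.
  have hw := dle _ dw.
  have nrN : nr (- (m n - m k)) = nr (m n - m k) by rewrite /nr normrN.
  rewrite e1 nrN e2 in hpar.
  have a0 := nr_ge0 (phi - m n); have b0 := nr_ge0 (phi - m k).
  have c0 := nr_ge0 (m n - m k).
  rewrite -/(m n) -/(m k) in ha hb.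
  set a := nr (phi - m n) in ha hpar a0.
  set b := nr (phi - m k) in hb hpar b0.
  set c := nr (m n - m k) in hpar c0 *.
  set z := nr (phi - D (2^-1 *: (g n + g k))) in hw hpar.
  set x := (n.+1%:R)^-1 in ha hn1 hn2 pos_n.
  set y := (k.+1%:R)^-1 in hb hk1 hk2 pos_k.
  have ha2 : a ^+ 2 <= d ^+ 2 + x * (2 * d + 1) by nra.
  have hb2 : b ^+ 2 <= d ^+ 2 + y * (2 * d + 1) by nra.
  have hc2 : c ^+ 2 < t ^+ 2 by nra.
  nra.
have cauchyC : forall eps : R[i], 0 < eps -> exists N, forall n, (N <= n)%N -> `|m n - m N| < eps.
  move=> eps e0.
  have er := reE (ltW e0).
  have t0 : 0 < complex.Re eps by rewrite ltC -er.
  have [N hN] := cauchy _ t0.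
  by exists N => n hn; rewrite er nrE -ltC; apply: hN.
have [mm mlim] : exists mm : H, forall eps : R[i], 0 < eps ->
    exists N, forall n, (N <= n)%N -> `|mm - m n| < eps.
  have : cvg (m @ \oo).
    apply: cauchy_cvg; apply: cauchy_exP => eps e0.
    have [N HN] := cauchyC eps e0. exists (m N). exists N => // n /= hn.
    by rewrite -ball_normE /= distrC; apply: HN.
  move=> /cvgrPdist_lt => h; exists (lim (m @ \oo)) => eps e0.
  by have [N _ HN] := h eps e0; exists N.
have mlimR : forall t : R, 0 < t -> exists N, forall n, (N <= n)%N -> nr (mm - m n) < t.
  move=> t t0; have tc : 0 < (t%:C)%C by rewrite (_ : 0 = (0 : R)%:C%C) // ltcR.
  have [N hN] := mlim _ tc.
  by exists N => n hn; rewrite ltC -nrE; apply: hN.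
pose r := phi - mm.
have rdef : r = phi - mm := erefl.
clearbody r.
have up : nr r <= d.
  apply: le_of_eps => t t0.
  have t20 : 0 < t / 2 by rewrite divr_gt0.
  have [N1 h1] := mlimR _ t20; have [N2 h2] := archi_inv t20.
  pose n := maxn N1 N2.
  have hn1 := h1 n (leq_maxl _ _); have hn2 := h2 n (leq_maxr _ _).
  have := nr_triangle (phi - m n) (m n - mm).
  rewrite addrA subrK -rdef.
  have -> : nr (m n - mm) = nr (mm - m n) by rewrite /nr distrC.
  have := (hg n).2; rewrite -/(m n).
  move=> ha hb; clear h1 h2; set x := n.+1%:R^-1 in hn2 ha; lra.
have ortho : forall chi, domA chi -> ip (D chi) r = 0.
  move=> chi dchi.
  set y := D chi; set c := ip y r.
  pose s := (nr y ^+ 2 + 1)^-1.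
  pose tt := (s%:C)%C * c.
  have low : d <= nr (r - tt *: y).
    apply: le_of_eps => t' t0.
    have [N hN] := mlimR t' t0.
    have dN : domA (tt *: chi + g N) := domL tt chi (g N) dchi (hg N).1.
    have := dle _ dN; rewrite (D_lin tt chi (g N)) -/y -/(m N).
    have -> : phi - (tt *: y + m N) = (r - tt *: y) + (mm - m N).
      by rewrite rdef addrA (addrAC phi) subrK opprD addrA.
    have := nr_triangle (r - tt *: y) (mm - m N).
    have := hN N (leqnn N).
    lra.
  have ttc : tt^* = (s%:C)%C * c^*.
    rewrite /tt rmorphM; congr (_ * _); exact: conj_realC.
  have expand : `|r - tt *: y| ^+ 2 =
      `|r| ^+ 2 - 2 * (s%:C)%C * `|c| ^+ 2 + (s%:C)%C ^+ 2 * `|c| ^+ 2 * `|y| ^+ 2.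
    rewrite -!(ipxx hH) (ipBl hH) !(ipBr hH) !(ipZl hH) !(ipZr hH) ttc normCK.
    rewrite (ipC hH y r) -/c /tt (ipxx hH y).
    ring.
  pose q := complex.Re `|c|.
  have hq : `|c| = (q%:C)%C := reE (normr_ge0 c).
  have q0 : 0 <= q by have := normr_ge0 c; rewrite hq (_ : 0 = (0 : R)%:C%C) // lecR.
  rewrite !nrE hq !CX C2 !CM CB CD in expand.
  have {}expand := complexI expand.
  have sp : 0 < s by rewrite invr_gt0; have := nr_ge0 y; nra.
  have se : s * (nr y ^+ 2 + 1) = 1 by rewrite mulVf // gt_eqF //; have := nr_ge0 y; nra.
  have r0 := nr_ge0 r.
  have h1 : nr r ^+ 2 <= nr (r - tt *: y) ^+ 2 by nra.
  have h2 : s * q ^+ 2 * (1 + s) <= 0 by nra.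
  have h3 : q ^+ 2 <= 0.
    have h4 : 0 < s * (1 + s) by nra.
    nra.
  have qz : q = 0 by nra.
  by apply/eqP; rewrite -normr_eq0 hq qz.
have Dr0 : D r = 0.
  have hz : forall u, ip (D r) u = 0.
    apply: (ext_dense (domA_dense hA)).
      by move=> a da; rewrite D_sym (ipC hH (D a) r) ortho // conjC0.
    apply: (cont2 (k1 := `|D r|) (k2 := 0)) => //; try exact: ctsed_id.
    move=> u a; rewrite -(ipBr hH) mulr0 addr0 mulrC; exact: CS.
  have := hz (D r); rewrite (ipxx hH) => /eqP; rewrite expf_eq0 /= normr_eq0.
  by move=> /eqP.
have hr : ip r phi = 0 := hphi r Dr0.
have rm : ip r mm = 0.
  apply: zero_lt => e e0.
  have [N hN] := mlim _ (pos_eps e0 (normr_ge0 r)).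
  have h0 : ip r (m N) = 0 by rewrite (ipC hH (m N) r) (ortho _ (hg N).1) conjC0.
  have -> : ip r mm = ip r (mm - m N) by rewrite (ipBr hH) h0 subr0.
  apply: le_lt_trans (CS hH _ _) _; rewrite mulrC; apply: small_prod => //.
  exact: hN.
have r0 : r = 0.
  have : ip r r = 0 by rewrite {2}rdef (ipBr hH) hr rm subrr.
  rewrite (ipxx hH) => /eqP; rewrite expf_eq0 /= normr_eq0.
  by move=> /eqP.
move=> e e0; have [N hN] := mlim e e0; exists (g N); split; first exact: (hg N).1.
have -> : phi = mm by apply/eqP; rewrite -subr_eq0 -rdef r0.
exact: hN N (leqnn N).
Qed.

Lemma main_dom chi psi : domA chi -> domA psi ->
  net_cvg le (fun j => ip (D chi) (U j psi)) 0.
Proof.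
move=> dchi dpsi e e0.
have e20 : 0 < e / 2 by rewrite divr_gt0.
pose K := `|A chi| * `|psi| + `|chi| * `|A psi|.
have K0 : 0 <= K by rewrite addr_ge0 // mulr_ge0.
have hK := reE K0; have he := reE (ltW e20).
set kR := complex.Re K in hK; set eR := complex.Re (e / 2) in he.
have eR0 : 0 < eR by rewrite ltC -he.
have kR0 : 0 <= kR by rewrite -(lecR 0) -hK.
have h0 := hD chi (pos_eps e20 (normr_ge0 psi)).
have h1 := hinf (kR / eR).
have [k hk] := net_and hJ h0 h1.
exists k => j kj; have [hj1 hj2] := hk j kj.
rewrite subr0.
have -> : ip (D chi) (U j psi) =
    ip (D chi - T j chi) (U j psi) + ip (T j chi) (U j psi).
  by rewrite (ipBl hH) subrK.
apply: (le_lt_trans (ler_normD _ _)); rewrite [e]splitr.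
apply: ltrD.
  apply: (le_lt_trans (CS hH _ _)); rewrite (S_iso hH (hU j)).
  by apply: small_prod => //; rewrite distrC.
rewrite T_sym /T (SiS (hU j)) (ipZr hH) (C_form (hC j)) // normrM.
have ell0 : 0 < ell j.
  have : 0 <= kR / eR by rewrite divr_ge0 // ltW.
  move: hj2; lra.
have cn : `|(((ell j)^-1)%:C)%C| = (((ell j)^-1)%:C)%C.
  by apply: ger0_norm; rewrite (_ : 0 = (0 : R)%:C%C) // lecR invr_ge0 ltW.
rewrite cn.
apply: (le_lt_trans (y := (((ell j)^-1)%:C)%C * K)).
  apply: ler_wpM2l; first by rewrite (_ : 0 = (0 : R)%:C%C) // lecR invr_ge0 ltW.
  apply: (le_trans (ler_normB _ _)); apply: lerD.
    by apply: (le_trans (CS hH _ _)); rewrite (S_iso hH (hU j)).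
  by apply: (le_trans (CS hH _ _)); rewrite (S_iso hH (hU j)).
rewrite hK he CM -ltC.
have : kR / eR < ell j := hj2.
rewrite ltr_pdivrMr // => h.
rewrite mulrC ltr_pdivrMr //.
by rewrite mulrC.
Qed.

Lemma final phi psi : (forall x, D x = 0 -> ip x phi = 0) ->
  net_cvg le (fun j => ip phi (U j psi)) 0.
Proof.
move=> hphi e e0.
have e30 : 0 < e / 3 by rewrite divr_gt0.
have [chi [dchi hchi]] := approx hphi (pos_eps e30 (normr_ge0 psi)).
have [psi' [dpsi' hpsi']] := dense_approx (domA_dense hA) psi (pos_eps e30 (normr_ge0 (D chi))).
have [k hk] := main_dom dchi dpsi' e30.
exists k => j kj; have hj := hk j kj; rewrite subr0 in hj; rewrite subr0.
have -> : ip phi (U j psi) = ip (phi - D chi) (U j psi) +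
    ip (D chi) (U j (psi - psi')) + ip (D chi) (U j psi').
  by rewrite (ipBl hH) (linB (S_lin (hU j))) (ipBr hH) addrA subrK subrK.
have -> : e = e / 3 + e / 3 + e / 3 by field.
apply: (le_lt_trans (ler_normD _ _)); apply: ltrD => //.
apply: (le_lt_trans (ler_normD _ _)); apply: ltrD.
  apply: (le_lt_trans (CS hH _ _)); rewrite (S_iso hH (hU j)).
  exact: small_prod.
apply: (le_lt_trans (CS hH _ _)); rewrite (S_iso hH (hU j)) mulrC.
exact: small_prod.
Qed.

End Main.

Unset Implicit Arguments.
Set Strict Implicit.
Local Open Scope complex_scope.

Theorem proposition2p1 (R : realType) (H : completeNormedModType R[i])
    (ip : H -> H -> R[i]) (J : Type) (le : J -> J -> Prop)
    (U Uinv : J -> H -> H) (ell : J -> R)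
    (domA : set H) (A : H -> H) (Comm : J -> H -> H) (D : H -> H) :
  is_hilbert ip ->
  directed le ->
  (forall j, unitary_op ip (U j) (Uinv j)) ->
  (forall j, 0 <= ell j) ->
  net_to_infty le ell ->
  self_adjoint ip domA A ->
  (forall j, is_commutator ip domA A (U j) (Comm j)) ->
  (forall psi : H,
     net_cvg le (fun j => ((ell j)^-1)%:C *: Comm j (Uinv j psi)) (D psi)) ->
  forall phi psi : H,
    (forall x : H, D x = 0 -> ip x phi = 0) ->
    net_cvg le (fun j => ip phi (U j psi)) 0.
Proof.
move=> hH hJ hU hell hinf hA hC hD phi psi hphi.
by apply: (@final R H ip J le U Uinv ell domA A Comm D); try eassumption.
Qed.
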